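(* For all integers $r \geq 2$ and $k \geq 3$, we have $P_r(k) > (k-1) r$.
   Context: A colour pattern on a vertex set $V$ is a sequence $G_1,\dots,G_r$ of pairwise edge-disjoint graphs all having vertex set $V$; it is $K_{k+1}$-free if no $G_i$ contains $K_{k+1}$. Given a colour pattern $G_1,\dots,G_r$ on $V$ and a colouring $c: V \to [r]$, a strongly monochromatic $K_k$ is a set of $k$ vertices all receiving the same colour $i$ under $c$ and forming a clique in $G_i$. $P_r(k)$ is the smallest integer $n$ such that there exists a $K_{k+1}$-free colour pattern $G_1,\dots,G_r$ on an $n$-element vertex set $V$ such that every colouring $V \to [r]$ yields a strongly monochromatic $K_k$. *)

(* Defs.v *)
From mathcomp Require Import all_boot.
Set Implicit Arguments. Unset Strict Implicit. Unset Printing Implicit Defensive.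

Definition simple_graph (V : finType) (g : rel V) : Prop :=
  (forall x, ~~ g x x) /\ (forall x y, g x y = g y x).

Definition is_clique (V : finType) (g : rel V) (S : {set V}) : Prop :=
  forall x y, x \in S -> y \in S -> x != y -> g x y.

Definition has_clique (V : finType) (g : rel V) (m : nat) : Prop :=
  exists S : {set V}, #|S| = m /\ is_clique g S.

Definition colour_pattern (V : finType) (r : nat) (G : 'I_r -> rel V) : Prop :=
  (forall i, simple_graph (G i)) /\
  (forall i j x y, i != j -> ~~ (G i x y && G j x y)).

Definition Kfree_pattern (V : finType) (r : nat) (G : 'I_r -> rel V) (m : nat) : Prop :=
  forall i, ~ has_clique (G i) m.

Definition has_strong_mono_clique (V : finType) (r : nat) (G : 'I_r -> rel V)
    (c : V -> 'I_r) (k : nat) : Prop :=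
  exists (i : 'I_r) (S : {set V}),
    #|S| = k /\ (forall x, x \in S -> c x = i) /\ is_clique (G i) S.

(* n-vertex witness for P_r(k) <= n: a K_{k+1}-free colour pattern on an n-set
   such that every colouring yields a strongly monochromatic K_k. *)
Definition P_witness (r k n : nat) : Prop :=
  exists G : 'I_r -> rel 'I_n,
    colour_pattern G /\ Kfree_pattern G k.+1 /\
    forall c : 'I_n -> 'I_r, has_strong_mono_clique G c k.

(* Main.v *)
Require Import Defs.
From mathcomp Require Import all_boot.

Theorem lemma3p1 (r k : nat) (hr : 2 <= r) (hk : 3 <= k) :
  forall n : nat, n <= (k - 1) * r -> ~ P_witness r k n.
Proof.
move=> n hn [G [_ [_ H]]].
have d0 : 0 < k - 1 by rewrite subn_gt0 (leq_trans _ hk).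
have cP : forall v : 'I_n, v %/ (k - 1) < r.
  move=> v; rewrite ltn_divLR // mulnC; exact: leq_trans (ltn_ord v) hn.
have mP : forall v : 'I_n, v %% (k - 1) < k - 1 by move=> v; rewrite ltn_mod.
have [i [S [hS [hc _]]]] := H (fun v => Ordinal (cP v)).
have inj : {in S &, injective (fun v : 'I_n => Ordinal (mP v))}.
  move=> x y xS yS /(congr1 val) /= e.
  have ex := hc x xS; have ey := hc y yS.
  have := congr1 val (etrans ex (esym ey)) => /= q.
  apply: val_inj => /=.
  by rewrite (divn_eq x (k - 1)) (divn_eq y (k - 1)) q e.
have := max_card [set Ordinal (mP v) | v in S].
rewrite card_in_imset // hS card_ord => /leq_trans => /(_ _ (leqnn _)).
move: d0 hk; clear; move=> d0 hk h; have : k <= k - 1 by [].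
by rewrite leqNgt ltn_subrL (leq_trans _ hk).
Qed.
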